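(* Let $0<\underline b\le\bar b<\infty$ and $0<\underline\theta\le\bar\theta<\infty$. There exists a constant $C>0$ depending only on $\nu,\underline b,\bar b,\underline\theta,\bar\theta$ such that for all $\delta\in(0,1]$, $b\in[\underline b,\bar b]$, $\theta\in[\underline\theta,\bar\theta]$ and $\lambda\in[-\pi,\pi]$: $$a^*_{b,\delta\theta}(\lambda)\le a^\delta_{b,\theta}(\lambda)\le a^*_{b,\delta\theta}(\lambda)+C\delta^{2\nu},\qquad a^\delta_{b,\theta}(\lambda)\le C\,g^*_{\nu,\delta\theta}(\lambda).$$
   Context: Fix $\nu\ge1/2$. For $\alpha>0$, $\omega\in\mathbb R$ let $g^*_{\nu,\alpha}(\omega)=C_\nu\alpha^{2\nu}(\alpha^2+\omega^2)^{-(\nu+1/2)}$ with $C_\nu=\Gamma(\nu+\frac12)/(\sqrt\pi\,\Gamma(\nu))$. For $\delta,\theta>0$ and $\lambda\in[-\pi,\pi]$ let $g^\delta_{\nu,\theta}(\lambda)=\sum_{k\in\mathbb Z}g^*_{\nu,\delta\theta}(\lambda+2k\pi)$. For $b>0$: $a^\delta_{b,\theta}=\dfrac{b\,g^\delta_{\nu,\theta}}{b\,g^\delta_{\nu,\theta}+(2\pi)^{-1}}$ and $a^*_{b,\alpha}=\dfrac{b\,g^*_{\nu,\alpha}}{b\,g^*_{\nu,\alpha}+(2\pi)^{-1}}$. *)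

(* Defs.v *)
From Stdlib Require Import Reals Lra Lia ZArith ClassicalEpsilon.
Open Scope R_scope.

(* Euler's Gamma function via Gauss's limit formula:
   Gamma x = lim_n n! n^x / (x (x+1) ... (x+n)),  for x > 0. *)
Definition gauss_seq (x : R) (n : nat) : R :=
  INR (fact n) * Rpower (INR n) x / prod_f_R0 (fun k => x + INR k) n.

Definition Gamma (x : R) : R :=
  epsilon (inhabits 0) (fun g => Un_cv (gauss_seq x) g).

(* Sum over k in Z, taken as the limit of symmetric partial sums
   sum_{|k| <= n} f k (all summands here are nonnegative). *)
Definition sumZ (f : Z -> R) : R :=
  epsilon (inhabits 0) (fun l =>
    infinite_sum
      (fun n => match n with
                | O => f 0%Z
                | S _ => f (Z.of_nat n) + f (- Z.of_nat n)%Z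
                end) l).

Definition C_nu (nu : R) : R := Gamma (nu + /2) / (sqrt PI * Gamma nu).

Definition gstar (nu alpha omega : R) : R :=
  C_nu nu * Rpower alpha (2 * nu)
  * Rpower (alpha ^ 2 + omega ^ 2) (- (nu + /2)).

Definition gdelta (nu delta theta lambda : R) : R :=
  sumZ (fun k => gstar nu (delta * theta) (lambda + 2 * IZR k * PI)).

Definition adelta (nu b delta theta lambda : R) : R :=
  b * gdelta nu delta theta lambda
  / (b * gdelta nu delta theta lambda + / (2 * PI)).

Definition astar (nu b alpha lambda : R) : R :=
  b * gstar nu alpha lambda / (b * gstar nu alpha lambda + / (2 * PI)).

(* Main.v *)
Require Import Defs.
From Stdlib Require Import Reals Lra Lia ZArith ClassicalEpsilon.
Open Scope R_scope.

Lemma ln_le_sub1 y : 0 < y -> ln y <= y - 1.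
Proof. intro H. pose proof (exp_ineq1_le (ln y)). rewrite exp_ln in H0; lra. Qed.

Lemma exp_le_mono a b : a <= b -> exp a <= exp b.
Proof. intro H. destruct (Rle_lt_or_eq _ _ H) as [H1|H1].
  left; now apply exp_increasing. subst; lra. Qed.

Lemma rpow_pos a b : 0 < Rpower a b.
Proof. unfold Rpower; apply exp_pos. Qed.

Lemma prod_pos x n : 0 < x -> 0 < prod_f_R0 (fun k => x + INR k) n.
Proof. intro Hx. induction n; cbn [prod_f_R0 INR].
  - lra.
  - apply Rmult_lt_0_compat; auto. pose proof (pos_INR (S n)). change (0 < x + INR (S n)). lra. Qed.

Lemma gauss_inc x m : 0 < x -> 0 < m ->
  (x + m + 1) * Rpower m x <= (m + 1) * Rpower (m + 1) x.
Proof.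
  intros Hx Hm.
  assert (E : Rpower (m+1) x = Rpower m x * Rpower ((m+1)/m) x).
  { rewrite Rpower_mult_distr; try lra.
    - f_equal. field. lra.
    - apply Rdiv_lt_0_compat; lra. }
  rewrite E.
  assert (Hl : / (m+1) <= ln ((m+1)/m)).
  { replace ((m+1)/m) with (/ (m/(m+1))) by (field; lra).
    rewrite ln_Rinv by (apply Rdiv_lt_0_compat; lra).
    assert (0 < m/(m+1)) by (apply Rdiv_lt_0_compat; lra).
    pose proof (ln_le_sub1 (m/(m+1)) H).
    replace (m/(m+1) - 1) with (- / (m+1)) in H0 by (field; lra). lra. }
  assert (Hr : 1 + x / (m+1) <= Rpower ((m+1)/m) x).
  { unfold Rpower. eapply Rle_trans; [|apply exp_ineq1_le].
    assert (x * / (m+1) <= x * ln ((m+1)/m)) by (apply Rmult_le_compat_l; lra).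
    unfold Rdiv in *. lra. }
  pose proof (rpow_pos m x) as Hq.
  assert ((m+1) * (1 + x/(m+1)) <= (m+1) * Rpower ((m+1)/m) x)
    by (apply Rmult_le_compat_l; lra).
  replace ((m+1) * (1 + x/(m+1))) with (x+m+1) in H by (field; lra).
  nra.
Qed.

Lemma gauss_dec x m : 0 < x -> 0 <= m ->
  (m + 1) * Rpower (m + 1 + (x+1)) x <= (x + m + 1) * Rpower (m + (x+1)) x.
Proof.
  intros Hx Hm. set (t := / (m + (x+1))).
  assert (Ht : 0 < t) by (apply Rinv_0_lt_compat; lra).
  assert (E : Rpower (m+1+(x+1)) x = Rpower (m+(x+1)) x * Rpower (1+t) x).
  { rewrite Rpower_mult_distr; try lra. f_equal. unfold t; field. lra. }
  rewrite E.
  assert (H1 : Rpower (1+t) x <= exp (x*t)).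
  { unfold Rpower. apply exp_le_mono.
    apply Rmult_le_compat_l; try lra. pose proof (ln_le_sub1 (1+t) ltac:(lra)); lra. }
  assert (H2 : exp (x*t) * (1 - x*t) <= 1).
  { pose proof (exp_ineq1_le (- (x*t))) as H.
    pose proof (exp_pos (x*t)).
    assert (Hm1 : exp (x*t) * exp (- (x*t)) = 1).
    { rewrite <- exp_plus. replace (x*t + - (x*t)) with 0 by ring. apply exp_0. }
    rewrite <- Hm1. apply Rmult_le_compat_l; lra. }
  assert (E2 : 1 - x*t = (m+1) / (m+(x+1))) by (unfold t; field; lra).
  rewrite E2 in H2.
  assert (H3 : (m+1) * exp (x*t) <= x + m + 1).
  { apply Rmult_le_compat_r with (r := m + (x+1)) in H2; [|lra].
    replace (exp (x * t) * ((m + 1) / (m + (x + 1))) * (m + (x + 1))) with ((m+1) * exp (x*t)) in H2 by (field; lra). lra. }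
  pose proof (rpow_pos (m+(x+1)) x) as Hq.
  assert (H4 : (m+1) * Rpower (1+t) x <= x + m + 1).
  { eapply Rle_trans; [|exact H3]. apply Rmult_le_compat_l; lra. }
  replace ((m + 1) * (Rpower (m + (x + 1)) x * Rpower (1 + t) x)) with
    (Rpower (m + (x + 1)) x * ((m+1) * Rpower (1 + t) x)) by ring.
  rewrite (Rmult_comm (x+m+1)). apply Rmult_le_compat_l; lra.
Qed.

Definition cseq (x : R) (n : nat) : R :=
  INR (fact n) * Rpower (INR n + (x+1)) x / prod_f_R0 (fun k => x + INR k) n.

Lemma fact_pos n : 0 < INR (fact n).
Proof. apply lt_0_INR. apply lt_O_fact. Qed.

Lemma prod_S x n : prod_f_R0 (fun k => x + INR k) (S n)
  = prod_f_R0 (fun k => x + INR k) n * (x + INR n + 1).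
Proof. cbn [prod_f_R0]. rewrite S_INR. ring. Qed.

Lemma fact_S n : INR (fact (S n)) = INR (fact n) * (INR n + 1).
Proof. change (fact (S n)) with (S n * fact n)%nat. rewrite mult_INR, S_INR. ring. Qed.

Lemma gauss_seq_pos x n : 0 < x -> 0 < gauss_seq x n.
Proof. intro Hx. unfold gauss_seq. apply Rdiv_lt_0_compat.
  apply Rmult_lt_0_compat. apply fact_pos. apply rpow_pos. apply prod_pos; auto. Qed.

Lemma gauss_growing x n : 0 < x -> (1 <= n)%nat -> gauss_seq x n <= gauss_seq x (S n).
Proof.
  intros Hx Hn. unfold gauss_seq. rewrite prod_S, fact_S, S_INR.
  pose proof (prod_pos x n Hx) as HP. pose proof (fact_pos n) as HF.
  assert (Hm : 1 <= INR n) by (apply (le_INR 1); auto).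
  pose proof (gauss_inc x (INR n) Hx ltac:(lra)) as H.
  set (P := prod_f_R0 (fun k => x + INR k) n) in *.
  set (F := INR (fact n)) in *.
  replace (F * (INR n + 1) * Rpower (INR n + 1) x / (P * (x + INR n + 1)))
    with (F / (P * (x + INR n + 1)) * ((INR n + 1) * Rpower (INR n + 1) x)) by (field; lra).
  replace (F * Rpower (INR n) x / P)
    with (F / (P * (x + INR n + 1)) * ((x + INR n + 1) * Rpower (INR n) x)) by (field; lra).
  apply Rmult_le_compat_l; auto.
  left. apply Rdiv_lt_0_compat; auto. apply Rmult_lt_0_compat; lra.
Qed.

Lemma cseq_dec x n : 0 < x -> cseq x (S n) <= cseq x n.
Proof.
  intros Hx. unfold cseq. rewrite prod_S, fact_S, S_INR.
  pose proof (prod_pos x n Hx) as HP. pose proof (fact_pos n) as HF.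
  pose proof (pos_INR n) as Hm.
  pose proof (gauss_dec x (INR n) Hx Hm) as H.
  set (P := prod_f_R0 (fun k => x + INR k) n) in *.
  set (F := INR (fact n)) in *.
  replace (F * (INR n + 1) * Rpower (INR n + 1 + (x+1)) x / (P * (x + INR n + 1)))
    with (F / (P * (x + INR n + 1)) * ((INR n + 1) * Rpower (INR n + 1 + (x+1)) x)) by (field; lra).
  replace (F * Rpower (INR n + (x+1)) x / P)
    with (F / (P * (x + INR n + 1)) * ((x + INR n + 1) * Rpower (INR n + (x+1)) x)) by (field; lra).
  apply Rmult_le_compat_l; auto.
  left. apply Rdiv_lt_0_compat; auto. apply Rmult_lt_0_compat; lra.
Qed.

Lemma cseq_le0 x n : 0 < x -> cseq x n <= cseq x 0.
Proof. intro Hx. induction n. lra. eapply Rle_trans; [apply cseq_dec|]; auto. Qed.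

Lemma gauss_le_c x n : 0 < x -> (1 <= n)%nat -> gauss_seq x n <= cseq x n.
Proof.
  intros Hx Hn. unfold gauss_seq, cseq.
  assert (Hm : 1 <= INR n) by (apply (le_INR 1); auto).
  unfold Rdiv. apply Rmult_le_compat_r.
  left; apply Rinv_0_lt_compat, prod_pos; auto.
  apply Rmult_le_compat_l. left; apply fact_pos.
  apply Rle_Rpower_l; lra.
Qed.

Lemma Gamma_pos x : 0 < x -> 0 < Gamma x.
Proof.
  intro Hx.
  set (b := fun m => gauss_seq x (m + 1)).
  assert (Hg : Un_growing b).
  { intro m. unfold b. replace (S m + 1)%nat with (S (m+1)) by lia.
    apply gauss_growing; auto; lia. }
  assert (Hub : has_ub b).
  { exists (cseq x 0). intros r [i ->]. unfold b.
    eapply Rle_trans; [apply gauss_le_c; auto; lia|]. apply cseq_le0; auto. }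
  destruct (growing_cv b Hg Hub) as [l Hl].
  assert (Hcv : Un_cv (gauss_seq x) l) by (apply (CV_shift _ 1); exact Hl).
  assert (Hl0 : b 0%nat <= l) by (apply growing_ineq; auto).
  assert (Hb0 : 0 < b 0%nat) by (apply gauss_seq_pos; auto).
  unfold Gamma.
  assert (HE := epsilon_spec (inhabits 0) (fun g => Un_cv (gauss_seq x) g) (ex_intro _ l Hcv)).
  cbv beta in HE. rewrite (UL_sequence _ _ _ HE Hcv). lra.
Qed.

Lemma C_nu_pos nu : 0 < nu -> 0 < C_nu nu.
Proof.
  intro H. unfold C_nu. apply Rdiv_lt_0_compat. apply Gamma_pos; lra.
  apply Rmult_lt_0_compat. apply sqrt_lt_R0, PI_RGT_0. apply Gamma_pos; lra.
Qed.

Definition uZ (f : Z -> R) (n : nat) : R :=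
  match n with
  | O => f 0%Z
  | S _ => f (Z.of_nat n) + f (- Z.of_nat n)%Z
  end.

Lemma sumZ_spec f l : infinite_sum (uZ f) l -> sumZ f = l.
Proof.
  intro H. unfold sumZ.
  assert (HE := epsilon_spec (inhabits 0) (fun l => infinite_sum (uZ f) l) (ex_intro _ l H)).
  cbv beta in HE. exact (UL_sequence _ _ _ HE H).
Qed.

Lemma h_bound nu a w m : / 2 <= nu -> 0 < a -> 1 <= m -> m * m <= w ^ 2 ->
  Rpower (a ^ 2 + w ^ 2) (- (nu + / 2)) <= / (m * m).
Proof.
  intros Hnu Ha Hm Hw. rewrite Rpower_Ropp.
  apply Rinv_le_contravar. nra.
  assert (H1 : Rpower (m*m) 1 <= Rpower (m*m) (nu + /2)) by (apply Rle_Rpower; nra).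
  rewrite Rpower_1 in H1 by nra.
  eapply Rle_trans; [exact H1|]. apply Rle_Rpower_l. lra. split; nra.
Qed.

Lemma gstar_eq nu a w : gstar nu a w = (C_nu nu * Rpower a (2 * nu)) * Rpower (a ^ 2 + w ^ 2) (- (nu + / 2)).
Proof. reflexivity. Qed.

Lemma gstar_nonneg nu a w : 0 < nu -> 0 <= gstar nu a w.
Proof. intro H. rewrite gstar_eq. left. apply Rmult_lt_0_compat; [apply Rmult_lt_0_compat|]; try apply rpow_pos. apply C_nu_pos; auto. Qed.

Lemma series_bounds nu a lam : / 2 <= nu -> 0 < a -> - PI <= lam <= PI ->
  gstar nu a lam <= sumZ (fun k => gstar nu a (lam + 2 * IZR k * PI)) /\
  sumZ (fun k => gstar nu a (lam + 2 * IZR k * PI)) <= gstar nu a lam + 4 * (C_nu nu * Rpower a (2 * nu)).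
Proof.
  intros Hnu Ha Hl.
  set (K := C_nu nu * Rpower a (2 * nu)).
  assert (HK : 0 < K) by (apply Rmult_lt_0_compat; [apply C_nu_pos; lra|apply rpow_pos]).
  set (f := fun k => gstar nu a (lam + 2 * IZR k * PI)).
  assert (Hf0 : f 0%Z = gstar nu a lam) by (unfold f; f_equal; simpl; ring).
  assert (Hpi : 3 < PI) by (pose proof PI2_3_2; lra).
  assert (Hu : forall n, 0 <= uZ f n).
  { intros [|n]; unfold uZ, f. apply gstar_nonneg; lra.
    pose proof (gstar_nonneg nu a (lam + 2 * IZR (Z.of_nat (S n)) * PI) ltac:(lra)).
    pose proof (gstar_nonneg nu a (lam + 2 * IZR (- Z.of_nat (S n)) * PI) ltac:(lra)). lra. }
  assert (HuS : forall n, uZ f (S n) <= 4 * K * (/ (INR n + 1) - / (INR n + 2))).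
  { intro n. unfold uZ, f. rewrite opp_IZR, <- INR_IZR_INZ, S_INR.
    pose proof (pos_INR n) as Hn.
    set (m := INR n + 1) in *.
    assert (Hm : 1 <= m) by (unfold m; lra).
    rewrite !gstar_eq. fold K.
    assert (Hw1 : m <= lam + 2 * m * PI) by nra.
    assert (Hw2 : lam + 2 * - m * PI <= - m) by nra.
    assert (H1 := h_bound nu a (lam + 2 * m * PI) m Hnu Ha Hm ltac:(simpl; nra)).
    assert (H2 := h_bound nu a (lam + 2 * - m * PI) m Hnu Ha Hm ltac:(simpl; nra)).
    replace (INR n + 2) with (m + 1) by (unfold m; ring).
    assert (H3 : / (m*m) <= 2 * (/ m - / (m+1))).
    { replace (/ m - / (m+1)) with (/ (m * (m+1))) by (field; lra).
      replace (/ (m*m)) with (/ m * / m) by (field; lra).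
      replace (/ (m*(m+1))) with (/ m * / (m+1)) by (field; lra).
      assert (/ m <= 2 * / (m+1)).
      { apply Rmult_le_reg_r with (r := m * (m+1)). nra.
        replace (/ m * (m * (m+1))) with (m+1) by (field; lra).
        replace (2 * / (m+1) * (m * (m+1))) with (2*m) by (field; lra). lra. }
      pose proof (Rinv_0_lt_compat m ltac:(lra)). nra. }
    nra. }
  assert (Hs : forall N, sum_f_R0 (uZ f) N <= f 0%Z + 4 * K - 4 * K / (INR N + 1)).
  { induction N.
    - simpl. unfold uZ. replace (4 * K - 4 * K / (0 + 1)) with 0 by field. lra.
    - cbn [sum_f_R0]. pose proof (HuS N). rewrite S_INR.
      replace (INR N + 1 + 1) with (INR N + 2) by ring.
      unfold Rdiv in *. lra. }
  assert (Hg : Un_growing (sum_f_R0 (uZ f))).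
  { intro n. cbn [sum_f_R0]. pose proof (Hu (S n)). lra. }
  assert (Hub : has_ub (sum_f_R0 (uZ f))).
  { exists (f 0%Z + 4 * K). intros r [i ->]. pose proof (Hs i).
    pose proof (pos_INR i).
    assert (0 <= 4 * K / (INR i + 1)) by (left; apply Rdiv_lt_0_compat; lra). lra. }
  destruct (growing_cv _ Hg Hub) as [l Hlim].
  rewrite (sumZ_spec f l Hlim).
  split.
  - rewrite <- Hf0. pose proof (growing_ineq _ _ Hg Hlim 0%nat). simpl in H. exact H.
  - rewrite <- Hf0.
    assert (Hc : Un_cv (fun _ : nat => f 0%Z + 4 * K) (f 0%Z + 4 * K)).
    { intros e He. exists 0%nat. intros. unfold Rdist. replace (f 0%Z + 4 * K - (f 0%Z + 4 * K)) with 0 by ring.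
      rewrite Rabs_R0. lra. }
    apply (Rle_cv_lim (Un := sum_f_R0 (uZ f)) (Vn := fun _ => f 0%Z + 4 * K)); auto.
    intro i. pose proof (Hs i). pose proof (pos_INR i).
    assert (0 <= 4 * K / (INR i + 1)) by (left; apply Rdiv_lt_0_compat; lra). lra.
Qed.

Lemma frac_mono x y d : 0 <= x <= y -> 0 < d -> x / (x + d) <= y / (y + d).
Proof.
  intros H Hd. assert (E : y / (y + d) - x / (x + d) = d * (y - x) / ((x + d) * (y + d))) by (field; lra).
  assert (0 <= d * (y - x) / ((x + d) * (y + d))).
  { apply Rmult_le_pos. nra. left. apply Rinv_0_lt_compat. nra. }
  lra.
Qed.

Lemma frac_lip x y d : 0 <= x <= y -> 0 < d -> y / (y + d) <= x / (x + d) + (y - x) / d.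
Proof.
  intros H Hd. assert (E : y / (y + d) - x / (x + d) = d * (y - x) / ((x + d) * (y + d))) by (field; lra).
  assert (d * (y - x) / ((x + d) * (y + d)) <= (y - x) / d).
  { unfold Rdiv. apply Rmult_le_reg_r with (r := (x+d)*(y+d)*d). { assert (0 < (x+d)*(y+d)) by nra. apply Rmult_lt_0_compat; lra. }
    replace (d * (y - x) * / ((x + d) * (y + d)) * ((x + d) * (y + d) * d)) with (d * d * (y - x)) by (field; lra).
    replace ((y - x) * / d * ((x + d) * (y + d) * d)) with ((x + d) * (y + d) * (y - x)) by (field; lra).
    apply Rmult_le_compat_r; nra. }
  lra.
Qed.

Lemma frac_le y d : 0 <= y -> 0 < d -> y / (y + d) <= y / d.
Proof.
  intros H Hd. unfold Rdiv. apply Rmult_le_compat_l; auto.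
  apply Rinv_le_contravar; lra.
Qed.

Theorem lemma5p2 (nu : R) (Hnu : / 2 <= nu)
  (bl bu thl thu : R)
  (Hb : 0 < bl <= bu) (Hth : 0 < thl <= thu) :
  exists C : R, 0 < C /\
    forall delta b theta lambda : R,
      0 < delta <= 1 ->
      bl <= b <= bu ->
      thl <= theta <= thu ->
      - PI <= lambda <= PI ->
      astar nu b (delta * theta) lambda <= adelta nu b delta theta lambda /\
      adelta nu b delta theta lambda
        <= astar nu b (delta * theta) lambda + C * Rpower delta (2 * nu) /\
      adelta nu b delta theta lambda <= C * gstar nu (delta * theta) lambda.
Proof.
  set (Cn := C_nu nu). set (T := Rpower thu (2 * nu)).
  set (RM := Rpower (thu ^ 2 + PI ^ 2) (nu + / 2)).
  assert (HCn : 0 < Cn) by (apply C_nu_pos; lra).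
  assert (HT : 0 < T) by apply rpow_pos.
  assert (HRM : 0 < RM) by apply rpow_pos.
  pose proof PI_RGT_0 as Hpi.
  assert (P1 : 0 < 8 * PI * bu * Cn * T).
  { apply Rmult_lt_0_compat; auto. apply Rmult_lt_0_compat; auto. nra. }
  assert (P2 : 0 < 2 * PI * bu * (1 + 4 * RM)).
  { apply Rmult_lt_0_compat; [nra|lra]. }
  exists (8 * PI * bu * Cn * T + 2 * PI * bu * (1 + 4 * RM)).
  split.
  { lra. }
  intros delta b theta lambda Hd Hbb Ht Hl.
  set (a := delta * theta).
  assert (Ha : 0 < a) by (unfold a; nra).
  destruct (series_bounds nu a lambda Hnu Ha Hl) as [S1 S2].
  fold Cn in S2.
  unfold adelta, astar, gdelta. fold a.
  set (G := sumZ (fun k => gstar nu a (lambda + 2 * IZR k * PI))) in *.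
  set (g0 := gstar nu a lambda) in *.
  set (K := Cn * Rpower a (2 * nu)) in *.
  set (d := / (2 * PI)).
  assert (Hdp : 0 < d) by (unfold d; apply Rinv_0_lt_compat; lra).
  assert (Hg0 : 0 <= g0) by (apply gstar_nonneg; lra).
  assert (HK : 0 < K) by (apply Rmult_lt_0_compat; auto; apply rpow_pos).
  assert (Hbp : 0 < b) by lra.
  assert (Hbg : 0 <= b * g0 <= b * G) by (split; [apply Rmult_le_pos|apply Rmult_le_compat_l]; lra).
  assert (Hdiv : forall z, z / d = 2 * PI * z) by (intro z; unfold d; field; lra).
  split; [|split].
  - apply frac_mono; auto.
  - eapply Rle_trans; [apply frac_lip; eauto|]. apply Rplus_le_compat_l.
    rewrite Hdiv.
    assert (Ha2 : Rpower a (2 * nu) <= Rpower delta (2 * nu) * T).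
    { unfold a. rewrite <- Rpower_mult_distr by lra. apply Rmult_le_compat_l.
      left; apply rpow_pos. apply Rle_Rpower_l; lra. }
    pose proof (rpow_pos delta (2 * nu)) as Hdn.
    assert (2 * PI * (b * G - b * g0) <= 8 * PI * b * K).
    { replace (2 * PI * (b * G - b * g0)) with ((2 * PI * b) * (G - g0)) by ring.
      replace (8 * PI * b * K) with ((2 * PI * b) * (4 * K)) by ring.
      apply Rmult_le_compat_l; [nra|lra]. }
    assert (8 * PI * b * K <= 8 * PI * bu * Cn * T * Rpower delta (2 * nu)).
    { unfold K. replace (8 * PI * b * (Cn * Rpower a (2 * nu))) with ((8 * PI * Cn) * (b * Rpower a (2 * nu))) by ring.
      replace (8 * PI * bu * Cn * T * Rpower delta (2 * nu)) with ((8 * PI * Cn) * (bu * (Rpower delta (2 * nu) * T))) by ring.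
      apply Rmult_le_compat_l. nra.
      apply Rmult_le_compat; try lra. left; apply rpow_pos. }
    assert (0 <= 2 * PI * bu * (1 + 4 * RM) * Rpower delta (2 * nu)) by (apply Rmult_le_pos; lra).
    lra.
  - eapply Rle_trans; [apply frac_le; lra|]. rewrite Hdiv.
    assert (Hh : K <= RM * g0).
    { unfold g0. rewrite gstar_eq. fold Cn. fold K. rewrite Rpower_Ropp.
      assert (Hle : Rpower (a ^ 2 + lambda ^ 2) (nu + / 2) <= RM).
      { unfold RM. apply Rle_Rpower_l. lra. split. nra.
        assert (a <= thu) by (unfold a; nra). simpl. nra. }
      assert (0 < Rpower (a ^ 2 + lambda ^ 2) (nu + / 2)) by apply rpow_pos.
      apply Rmult_le_reg_r with (r := Rpower (a ^ 2 + lambda ^ 2) (nu + / 2)); auto.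
      replace (RM * (K * / Rpower (a ^ 2 + lambda ^ 2) (nu + / 2)) * Rpower (a ^ 2 + lambda ^ 2) (nu + / 2)) with (K * RM) by (field; lra).
      apply Rmult_le_compat_l; lra. }
    assert (HG : G <= (1 + 4 * RM) * g0) by lra.
    assert (2 * PI * (b * G) <= 2 * PI * b * ((1 + 4 * RM) * g0)).
    { replace (2 * PI * (b * G)) with ((2 * PI * b) * G) by ring.
      apply Rmult_le_compat_l; [nra|lra]. }
    assert (2 * PI * b * ((1 + 4 * RM) * g0) <= 2 * PI * bu * (1 + 4 * RM) * g0).
    { replace (2 * PI * b * ((1 + 4 * RM) * g0)) with (b * (2 * PI * (1 + 4 * RM) * g0)) by ring.
      replace (2 * PI * bu * (1 + 4 * RM) * g0) with (bu * (2 * PI * (1 + 4 * RM) * g0)) by ring.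
      apply Rmult_le_compat_r; [|lra]. apply Rmult_le_pos; [nra|lra]. }
    assert (0 <= 8 * PI * bu * Cn * T * g0) by (apply Rmult_le_pos; lra).
    rewrite Rmult_plus_distr_r. lra.
Qed.
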